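(* Let $V$ be a real vector space, let $R:V\to\mathbb{R}\cup\{+\infty\}$ and $f:\mathbb{R}^m\to\mathbb{R}\cup\{+\infty\}$ be convex functions, and let $\Phi:V\to\mathbb{R}^m$ be linear and surjective. Let $S$ be the set of minimizers of $\min_{u\in V} R(u)+f(\Phi u)$. Assume that $p\in S$, that $R(p)+f(\Phi p)<+\infty$, and that the level set $\mathrm{lev}_R(p)=\{u\in V: R(u)\le R(p)\}$ is linearly closed and contains no line. Let $\ell$ be the dimension of the minimal face $F(\Phi p,\mathrm{lev}_f(\Phi p))$ of $\Phi p$ in $\mathrm{lev}_f(\Phi p)=\{w\in\mathbb{R}^m: f(w)\le f(\Phi p)\}$. If $p$ belongs to a face of $S$ with dimension $j<+\infty$, then $p$ belongs to a face of $\mathrm{lev}_R(p)$ with dimension at most $k$, where $$k=\begin{cases} m-\ell+j-1 & \text{if } R(p)>\inf_V R \text{ or } f(\Phi p)>\inf_{\mathbb{R}^m} f,\\ m-\ell+j & \text{otherwise.}\end{cases}$$ If, moreover, $p$ satisfies the double obliqueness condition, then $k$ can be replaced by $m-\ell+j-2$.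
   Context: Convex-geometric notions (for a convex set $C$ in a real vector space $X$): for $x\neq y$, the open segment is $]x,y[=\{tx+(1-t)y: 0<t<1\}$. A face of $C$ is a convex subset $F\subseteq C$ such that every open segment contained in $C$ which intersects $F$ is contained in $F$. The dimension of a face is the dimension of its affine hull. For $x\in C$, the minimal (elementary) face $F(x,C)$ is the intersection of all faces of $C$ containing $x$ (it is itself a face). $C$ is linearly closed if its intersection with every line is a closed subset of that line; $C$ contains no line if there are no $a\in X$, $v\neq0$ with $a+\mathbb{R}v\subseteq C$. Double obliqueness condition: let $M=R(p)+f(\Phi p)$ be the minimal value, $\mathrm{epi}(R)=\{(u,r)\in V\times\mathbb{R}: R(u)\le r\}$ and $\mathrm{hypo}(M-f)=\{(w,r)\in\mathbb{R}^m\times\mathbb{R}: M-f(w)\ge r\}$. For a convex set $C\subseteq X\times\mathbb{R}$ and $(x,r)\in C$, the face $F((x,r),C)$ is called horizontal if its affine hull is contained in $X\times\{r\}$ and oblique otherwise. The point $p$ satisfies the double obliqueness condition if both $F((p,R(p)),\mathrm{epi}(R))$ and $F((\Phi p, M-f(\Phi p)),\mathrm{hypo}(M-f))$ are oblique (note $M-f(\Phi p)=R(p)$). *)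

(* Defs.v *)
From Stdlib Require Import Reals Lra List ZArith FunctionalExtensionality.
Open Scope R_scope.

Record RVS := mkRVS {
  vcar :> Type;
  vadd : vcar -> vcar -> vcar;
  vscal : R -> vcar -> vcar;
  vzero : vcar;
  vaddA : forall x y z, vadd x (vadd y z) = vadd (vadd x y) z;
  vaddC : forall x y, vadd x y = vadd y x;
  vadd0 : forall x, vadd vzero x = x;
  vaddN : forall x, vadd x (vscal (-1) x) = vzero;
  vscal1 : forall x, vscal 1 x = x;
  vscalA : forall a b x, vscal a (vscal b x) = vscal (a * b) x;
  vscalDr : forall a x y, vscal a (vadd x y) = vadd (vscal a x) (vscal a y);
  vscalDl : forall a b x, vscal (a + b) x = vadd (vscal a x) (vscal b x)
}.
Arguments vadd {r}.
Arguments vscal {r}.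
Arguments vzero {r}.

Definition vsub {V : RVS} (x y : V) : V := vadd x (vscal (-1) y).

Definition R_RVS : RVS.
Proof.
  refine (mkRVS R Rplus Rmult 0 _ _ _ _ _ _ _ _); intros; ring.
Defined.

Definition Rn (m : nat) : RVS.
Proof.
  refine (mkRVS ({i : nat | (i < m)%nat} -> R)
            (fun x y i => x i + y i) (fun a x i => a * x i) (fun _ => 0)
            _ _ _ _ _ _ _ _);
  intros; apply functional_extensionality; intro; ring.
Defined.

Definition prodVS (V W : RVS) : RVS.
Proof.
  refine (mkRVS (V * W)%type
            (fun x y => (vadd (fst x) (fst y), vadd (snd x) (snd y)))
            (fun a x => (vscal a (fst x), vscal a (snd x)))
            (vzero, vzero) _ _ _ _ _ _ _ _); intros; simpl.
  - f_equal; apply vaddA.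
  - f_equal; apply vaddC.
  - destruct x; simpl; f_equal; apply vadd0.
  - f_equal; apply vaddN.
  - destruct x; simpl; f_equal; apply vscal1.
  - f_equal; apply vscalA.
  - f_equal; apply vscalDr.
  - f_equal; apply vscalDl.
Defined.

Fixpoint lin_comb {V : RVS} (c : list R) (l : list V) : V :=
  match c, l with
  | a :: c', x :: l' => vadd (vscal a x) (lin_comb c' l')
  | _, _ => vzero
  end.

Definition lin_indep {V : RVS} (l : list V) : Prop :=
  forall c : list R, length c = length l -> lin_comb c l = vzero ->
    Forall (fun a => a = 0) c.

Definition is_linear {V W : RVS} (T : V -> W) : Prop :=
  (forall x y, T (vadd x y) = vadd (T x) (T y)) /\
  (forall a x, T (vscal a x) = vscal a (T x)).

Definition aff {V : RVS} (A : V -> Prop) (x : V) : Prop :=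
  exists (pts : list V) (c : list R),
    length c = length pts /\ Forall A pts /\ fold_right Rplus 0 c = 1 /\
    x = lin_comb c pts.

Definition aff_dir {V : RVS} (A : V -> Prop) (v : V) : Prop :=
  exists x y, aff A x /\ aff A y /\ v = vsub x y.

Definition affdim {V : RVS} (A : V -> Prop) (d : nat) : Prop :=
  (exists a, A a) /\
  (exists l : list V, length l = d /\ lin_indep l /\ Forall (aff_dir A) l) /\
  (forall l : list V, lin_indep l -> Forall (aff_dir A) l -> (length l <= d)%nat).

Definition seg {V : RVS} (x y : V) (t : R) : V :=
  vadd (vscal t x) (vscal (1 - t) y).

Definition convex_set {V : RVS} (C : V -> Prop) : Prop :=
  forall x y t, C x -> C y -> 0 <= t <= 1 -> C (seg x y t).

Definition face {V : RVS} (F C : V -> Prop) : Prop :=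
  convex_set F /\ (forall z, F z -> C z) /\
  forall x y : V, x <> y ->
    (forall t, 0 < t < 1 -> C (seg x y t)) ->
    (exists t, 0 < t < 1 /\ F (seg x y t)) ->
    (forall t, 0 < t < 1 -> F (seg x y t)).

Definition minface {V : RVS} (x : V) (C : V -> Prop) (y : V) : Prop :=
  forall F, face F C -> F x -> F y.

Definition linearly_closed {V : RVS} (C : V -> Prop) : Prop :=
  forall (a v : V), closed_set (fun t : R => C (vadd a (vscal t v))).

Definition contains_no_line {V : RVS} (C : V -> Prop) : Prop :=
  ~ exists (a v : V), v <> vzero /\ forall t : R, C (vadd a (vscal t v)).

Inductive ereal := Fin (x : R) | PInf.

Definition ele (a b : ereal) : Prop :=
  match a, b with
  | Fin x, Fin y => x <= y
  | _, PInf => True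
  | PInf, Fin _ => False
  end.

Definition elt (a b : ereal) : Prop :=
  match a, b with
  | Fin x, Fin y => x < y
  | Fin _, PInf => True
  | PInf, _ => False
  end.

Definition eplus (a b : ereal) : ereal :=
  match a, b with
  | Fin x, Fin y => Fin (x + y)
  | _, _ => PInf
  end.

Definition real_of (a : ereal) : R :=
  match a with Fin x => x | PInf => 0 end.

Definition convex_fun {V : RVS} (g : V -> ereal) : Prop :=
  forall (x y : V) (rx ry t : R), 0 <= t <= 1 ->
    ele (g x) (Fin rx) -> ele (g y) (Fin ry) ->
    ele (g (seg x y t)) (Fin (t * rx + (1 - t) * ry)).

(* inf_V g < g x  (as a strict inequality with the infimum) *)
Definition above_inf {V : RVS} (g : V -> ereal) (x : V) : Prop :=
  exists y, elt (g y) (g x).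

Definition lev {V : RVS} (g : V -> ereal) (x : V) (u : V) : Prop :=
  ele (g u) (g x).

Definition argmin_set {V W : RVS} (Rg : V -> ereal) (f : W -> ereal)
  (Phi : V -> W) (u : V) : Prop :=
  forall v, ele (eplus (Rg u) (f (Phi u))) (eplus (Rg v) (f (Phi v))).

Definition epi {V : RVS} (g : V -> ereal) (z : prodVS V R_RVS) : Prop :=
  ele (g (fst z)) (Fin (snd z)).

(* hypo(M - f) = {(w,r) | M - f(w) >= r}, with M - (+oo) = -oo *)
Definition hypo_shift {W : RVS} (M : R) (f : W -> ereal)
  (z : prodVS W R_RVS) : Prop :=
  match f (fst z) with
  | Fin y => snd z <= M - y
  | PInf => False
  end.

Definition oblique_face {X : RVS} (z : prodVS X R_RVS)
  (C : prodVS X R_RVS -> Prop) : Prop :=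
  ~ (forall w, aff (minface z C) w -> snd w = snd z).

Definition double_oblique {V : RVS} {m : nat} (Rg : V -> ereal)
  (f : Rn m -> ereal) (Phi : V -> Rn m) (p : V) : Prop :=
  let M := real_of (eplus (Rg p) (f (Phi p))) in
  oblique_face ((p, real_of (Rg p)) : prodVS V R_RVS) (epi Rg) /\
  oblique_face ((Phi p, M - real_of (f (Phi p))) : prodVS (Rn m) R_RVS)
               (hypo_shift M f).

Definition in_face_dim_le {V : RVS} (C : V -> Prop) (p : V) (k : Z) : Prop :=
  exists G : V -> Prop, face G C /\ G p /\
    exists d : nat, affdim G d /\ (Z.of_nat d <= k)%Z.

(* Main.v *)
Require Import Defs.
From Stdlib Require Import Reals ZArith List Lra Lia Classical FunctionalExtensionality.
Open Scope R_scope.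


Section VA.
Context {V : RVS}.
Implicit Types x y z : V.

Lemma vadd0r x : vadd x vzero = x.
Proof. rewrite vaddC; apply vadd0. Qed.

Lemma vscal0 x : vscal 0 x = vzero.
Proof.
  assert (H : vscal 0 x = vadd (vscal 0 x) (vscal 0 x)).
  { rewrite <- vscalDl; f_equal; ring. }
  assert (H2 := vaddN _ (vscal 0 x)).
  rewrite H in H2 at 1. rewrite <- vaddA, vaddN, vadd0r in H2. exact H2.
Qed.

Lemma vscalr0 r : vscal r (@vzero V) = vzero.
Proof. rewrite <- (vscal0 vzero), vscalA, Rmult_0_r; reflexivity. Qed.

Lemma vadd_swap4 (a b c d : V) : vadd (vadd a b) (vadd c d) = vadd (vadd a c) (vadd b d).
Proof.
  rewrite <- !vaddA; f_equal. rewrite !vaddA; f_equal; apply vaddC.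
Qed.

Fixpoint lc (c : nat -> R) (env : list V) : V :=
  match env with
  | nil => vzero
  | x :: e => vadd (vscal (c O) x) (lc (fun i => c (S i)) e)
  end.

Lemma lc_ext c1 c2 env : (forall i, c1 i = c2 i) -> lc c1 env = lc c2 env.
Proof.
  revert c1 c2; induction env; intros c1 c2 H; simpl; auto.
  rewrite H; f_equal; apply IHenv; auto.
Qed.

Lemma lc_add c1 c2 env : lc (fun i => c1 i + c2 i) env = vadd (lc c1 env) (lc c2 env).
Proof.
  revert c1 c2; induction env; intros; simpl. rewrite vadd0; auto.
  rewrite vscalDl, IHenv. apply vadd_swap4.
Qed.

Lemma lc_scal r c env : lc (fun i => r * c i) env = vscal r (lc c env).
Proof.
  revert c; induction env; intros; simpl. rewrite vscalr0; auto.
  rewrite vscalDr, IHenv, vscalA; auto.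
Qed.

Lemma lc_zero env : lc (fun _ => 0) env = vzero.
Proof. induction env; simpl; auto. rewrite IHenv, vscal0, vadd0; auto. Qed.

Lemma lc_atom env n : lc (fun i => if Nat.eqb i n then 1 else 0) env = nth n env vzero.
Proof.
  revert n; induction env; intros n; simpl. destruct n; auto.
  destruct n; simpl.
  - try rewrite (lc_ext _ (fun _ => 0)) by (intros; reflexivity). rewrite lc_zero, vscal1, vadd0r; auto.
  - rewrite vscal0, vadd0. apply IHenv.
Qed.
End VA.

Inductive vt := VAtom (n : nat) | VAdd (a b : vt) | VScal (r : R) (a : vt) | VZero | VSub (a b : vt).

Fixpoint veval {V : RVS} (env : list V) (e : vt) : V :=
  match e with
  | VAtom n => nth n env vzero
  | VAdd a b => vadd (veval env a) (veval env b)
  | VScal r a => vscal r (veval env a)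
  | VZero => vzero
  | VSub a b => vsub (veval env a) (veval env b)
  end.

Fixpoint vnorm (e : vt) : nat -> R :=
  match e with
  | VAtom n => fun i => if Nat.eqb i n then 1 else 0
  | VAdd a b => fun i => vnorm a i + vnorm b i
  | VScal r a => fun i => r * vnorm a i
  | VZero => fun _ => 0
  | VSub a b => fun i => vnorm a i + (-1) * vnorm b i
  end.

Lemma veval_lc {V : RVS} (env : list V) e : veval env e = lc (vnorm e) env.
Proof.
  induction e; simpl.
  - symmetry; apply lc_atom.
  - rewrite lc_add, IHe1, IHe2; auto.
  - rewrite lc_scal, IHe; auto.
  - symmetry; apply lc_zero.
  - unfold vsub. rewrite lc_add, lc_scal, IHe1, IHe2; auto.
Qed.

Lemma veval_eq {V : RVS} (env : list V) e1 e2 :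
  (forall i, vnorm e1 i = vnorm e2 i) -> veval env e1 = veval env e2.
Proof. intros H; rewrite !veval_lc; apply lc_ext; auto. Qed.

Ltac inlist t l :=
  match l with
  | nil => constr:(false)
  | cons t _ => constr:(true)
  | cons _ ?r => inlist t r
  end.

Ltac vcollect t env :=
  match t with
  | vadd ?a ?b => let e1 := vcollect a env in vcollect b e1
  | vsub ?a ?b => let e1 := vcollect a env in vcollect b e1
  | vscal _ ?a => vcollect a env
  | vzero => env
  | _ => match inlist t env with
         | true => env
         | false => constr:(cons t env)
         end
  end.

Ltac vlookup t l :=
  match l with
  | cons t _ => constr:(O)
  | cons _ ?r => let n := vlookup t r in constr:(S n)
  end.

Ltac vreify t env :=
  match t with
  | vadd ?a ?b => let x := vreify a env in let y := vreify b env in constr:(VAdd x y)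
  | vsub ?a ?b => let x := vreify a env in let y := vreify b env in constr:(VSub x y)
  | vscal ?r ?a => let x := vreify a env in constr:(VScal r x)
  | vzero => constr:(VZero)
  | _ => let n := vlookup t env in constr:(VAtom n)
  end.

Ltac vring_core :=
  match goal with
  | |- @eq (vcar ?V) ?a ?b =>
    let env0 := vcollect a (@nil (vcar V)) in
    let env := vcollect b env0 in
    let ea := vreify a env in
    let eb := vreify b env in
    change (veval env ea = veval env eb); apply veval_eq;
    intros [|[|[|[|[|[|[|[|[|[|?]]]]]]]]]]; simpl; try solve [ring | field]
  end.

Ltac vring := unfold seg in *; solve [vring_core].

Lemma test {V : RVS} (x y : V) t : seg x y t = vadd y (vscal t (vsub x y)).
Proof. vring. Qed.
Lemma test2 {V : RVS} (x y : V) t : t <> 0 -> vscal (1/t) (vscal t x) = x.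
Proof. intros. vring_core. field; auto. Qed.


Fixpoint span {V : RVS} (l : list V) (v : V) : Prop :=
  match l with
  | nil => v = vzero
  | a :: l' => exists c r, span l' r /\ v = vadd (vscal c a) r
  end.

Fixpoint indep {V : RVS} (l : list V) : Prop :=
  match l with
  | nil => True
  | a :: l' => indep l' /\ ~ span l' a
  end.

Section Span.
Context {V : RVS}.

Lemma span_zero (l : list V) : span l vzero.
Proof. induction l; simpl; auto. exists 0, vzero; split; auto. vring. Qed.

Lemma span_add (l : list V) u v : span l u -> span l v -> span l (vadd u v).
Proof.
  revert u v; induction l; simpl; intros u v Hu Hv.
  - subst; vring.
  - destruct Hu as [c1 [r1 [H1 ->]]]; destruct Hv as [c2 [r2 [H2 ->]]].
    exists (c1 + c2), (vadd r1 r2); split; auto. vring.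
Qed.

Lemma span_scal (l : list V) c v : span l v -> span l (vscal c v).
Proof.
  revert v; induction l; simpl; intros v Hv.
  - subst; vring.
  - destruct Hv as [c1 [r1 [H1 ->]]].
    exists (c * c1), (vscal c r1); split; auto. vring.
Qed.

Lemma span_sub (l : list V) u v : span l u -> span l v -> span l (vsub u v).
Proof. intros; apply span_add; auto; apply span_scal; auto. Qed.

Lemma span_cons (l : list V) a v : span l v -> span (a :: l) v.
Proof. intros; exists 0, v; split; auto; vring. Qed.

Lemma span_head (l : list V) a : span (a :: l) a.
Proof. exists 1, vzero; split; [apply span_zero| vring]. Qed.

Lemma span_closed (P : V -> Prop) (l : list V) :
  P vzero -> (forall u v, P u -> P v -> P (vadd u v)) ->
  (forall c u, P u -> P (vscal c u)) -> Forall P l -> forall v, span l v -> P v.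
Proof.
  intros H0 HA HS HF; induction HF; simpl; intros v Hv.
  - subst; auto.
  - destruct Hv as [c [r [Hr ->]]]; auto.
Qed.

Lemma span_trans (l1 l2 : list V) : Forall (span l2) l1 -> forall v, span l1 v -> span l2 v.
Proof. intros; eapply span_closed; eauto using span_zero, span_add, span_scal. Qed.

Lemma span_app (l1 l2 : list V) v :
  span (l1 ++ l2) v <-> exists v1 v2, span l1 v1 /\ span l2 v2 /\ v = vadd v1 v2.
Proof.
  revert v; induction l1; simpl; intros v; split.
  - intros H; exists vzero, v; repeat split; auto; vring.
  - intros [v1 [v2 [-> [H ->]]]]; replace (vadd vzero v2) with v2 by vring; auto.
  - intros [c [r [Hr ->]]]. apply IHl1 in Hr. destruct Hr as [v1 [v2 [H1 [H2 ->]]]].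
    exists (vadd (vscal c a) v1), v2; repeat split; auto.
    exists c, v1; split; auto. vring.
  - intros [v1 [v2 [[c [r [Hr ->]]] [H2 ->]]]].
    exists c, (vadd r v2); split. apply IHl1; exists r, v2; auto. vring.
Qed.

Lemma indep_nz (l : list V) a : indep (a :: l) -> a <> vzero.
Proof. intros [_ H] E; subst; apply H, span_zero. Qed.

Lemma span_lc (l : list V) v :
  span l v <-> exists c, length c = length l /\ v = lin_comb c l.
Proof.
  revert v; induction l as [|a l IH]; simpl; intros v; split.
  - intros ->; exists nil; auto.
  - intros [c [Hc ->]]; destruct c; simpl; auto.
  - intros [c0 [r [Hr ->]]]. apply IH in Hr; destruct Hr as [c [Hc ->]].
    exists (c0 :: c); simpl; auto.
  - intros [c [Hc ->]]. destruct c as [|c0 c]; simpl in Hc; [discriminate|].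
    exists c0, (lin_comb c l); split; auto. apply IH; exists c; auto.
Qed.

Lemma lin_indep_indep (l : list V) : lin_indep l <-> indep l.
Proof.
  induction l as [|a l IH]; simpl; split.
  - auto.
  - intros _ c Hc _. destruct c; simpl in *; [constructor|discriminate].
  - intros H. split.
    + apply IH. intros c Hc E.
      assert (H' := H (0 :: c) ltac:(simpl; lia) ltac:(simpl; rewrite E; vring)).
      inversion H'; auto.
    + intros Hs. apply span_lc in Hs. destruct Hs as [c [Hc E]].
      assert (H' := H ((-1) :: c) ltac:(simpl; lia) ltac:(simpl; rewrite <- E; vring)).
      inversion H'; lra.
  - intros [Hi Hs] c Hc E. destruct c as [|c0 c]; simpl in Hc; [discriminate|].
    simpl in E.
    destruct (Req_dec c0 0) as [H0|H0].
    + subst c0. constructor; auto. apply (proj2 IH Hi); [lia|].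
      rewrite <- E; vring.
    + exfalso; apply Hs. apply span_lc. exists (map (fun x => (-1/c0) * x) c).
      split. rewrite length_map; lia.
      assert (Hm : forall (c : list R) (l : list V), lin_comb (map (fun x => (-1/c0) * x) c) l = vscal (-1/c0) (lin_comb c l)).
      { intros c1 l1; revert l1; induction c1; destruct l1; cbn [map lin_comb]; try vring. rewrite IHc1. vring. }
      rewrite Hm. replace (lin_comb c l) with (vsub (vadd (vscal c0 a) (lin_comb c l)) (vscal c0 a)) by vring.
      rewrite E. vring_core. field; auto.
Qed.
End Span.

Section Lin.
Context {V W : RVS} (T : V -> W) (HT : is_linear T).

Lemma lin0 : T vzero = vzero.
Proof. destruct HT as [_ H]. rewrite <- (vscal0 vzero), H. apply vscal0. Qed.

Lemma linsub x y : T (vsub x y) = vsub (T x) (T y).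
Proof. destruct HT as [H1 H2]. unfold vsub; rewrite H1, H2; auto. Qed.

Lemma lin_span l v : span l v -> span (map T l) (T v).
Proof.
  revert v; induction l; simpl; intros v Hv.
  - subst; apply lin0.
  - destruct Hv as [c [r [Hr ->]]]. exists c, (T r); split; auto.
    destruct HT as [H1 H2]; rewrite H1, H2; auto.
Qed.

Lemma lin_span_inv l w : span (map T l) w -> exists v, span l v /\ T v = w.
Proof.
  revert w; induction l; simpl; intros w Hw.
  - subst; exists vzero; split; auto; apply lin0.
  - destruct Hw as [c [r [Hr ->]]]. destruct (IHl r Hr) as [v [Hv <-]].
    exists (vadd (vscal c a) v); split. exists c, v; auto.
    destruct HT as [H1 H2]; rewrite H1, H2; auto.
Qed.

Lemma split_lemma (b : list W) (Hb : indep b) :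
  forall xs, indep xs -> exists ys gs, indep ys /\ indep (map T gs ++ b) /\
   Forall (fun y => span xs y /\ span b (T y)) ys /\ Forall (span xs) gs /\
   (length ys + length gs = length xs)%nat.
Proof.
  induction xs as [|x0 xs IH]; simpl; intros Hx.
  - exists nil, nil; simpl; repeat split; auto.
  - destruct Hx as [Hx Hn]. destruct (IH Hx) as [ys [gs [Hy [Hg [Fy [Fg Hl]]]]]].
    assert (Fy' : Forall (fun y => span (x0 :: xs) y /\ span b (T y)) ys).
    { eapply Forall_impl; [|exact Fy]. intros y [H1 H2]; split; auto. apply span_cons; auto. }
    assert (Fg' : Forall (span (x0 :: xs)) gs).
    { eapply Forall_impl; [|exact Fg]. intros y H1; apply span_cons; auto. }
    destruct (classic (span (map T gs ++ b) (T x0))) as [Hs|Hs].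
    + apply span_app in Hs. destruct Hs as [w1 [w2 [H1 [H2 E]]]].
      destruct (lin_span_inv _ _ H1) as [g [Hgs Eg]].
      assert (Hgx : span xs g) by (eapply span_trans; eauto).
      exists (vsub x0 g :: ys), gs. repeat split; auto.
      * intros Hsp. apply Hn.
        replace x0 with (vadd (vsub x0 g) g) by vring.
        apply span_add; auto. eapply span_trans; [|exact Hsp].
        eapply Forall_impl; [|exact Fy]. intros y [H _]; auto.
      * constructor; auto. split.
        -- exists 1, (vscal (-1) g); split. apply span_scal; auto. unfold vsub; vring.
        -- rewrite linsub, E, <- Eg. replace (vsub (vadd (T g) w2) (T g)) with w2 by vring. auto.
      * simpl; lia.
    + exists ys, (x0 :: gs). repeat split; auto.
      constructor; auto. apply span_head.
      simpl; lia.
Qed.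
End Lin.

Lemma R_indep (l : list R_RVS) : indep l -> (length l <= 1)%nat.
Proof.
  destruct l as [|a [|b r]]; cbn [length]; try lia.
  intros [[Hr Hb] Ha]. exfalso.
  destruct (Req_dec b 0) as [E|E].
  - subst b. apply Hb. apply (span_zero (V:=R_RVS)).
  - apply Ha. exists (a / b), vzero. split.
    apply (span_zero (V:=R_RVS)). assert (K : forall x y : R, y <> 0 -> x = x/y*y+0) by (intros; field; auto). apply K; auto.
Qed.

Section Rn.
Variable m : nat.

Definition Zk (k : nat) (v : Rn m) : Prop :=
  forall i (H : (i < m)%nat), (k <= i)%nat -> v (exist _ i H) = 0.

Definition Tk (k : nat) (v : Rn m) : R_RVS :=
  match lt_dec k m with left H => v (exist _ k H) | right _ => 0 end.

Lemma Tk_lin k : is_linear (Tk k).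
Proof.
  split; intros; unfold Tk; destruct (lt_dec k m); cbn; ring.
Qed.

Lemma Zk_span k l : Forall (Zk k) l -> forall v, span l v -> Zk k v.
Proof.
  intros HF; apply span_closed; auto; unfold Zk; cbn; intros.
  - reflexivity.
  - rewrite H, H0; auto; ring.
  - rewrite H; auto; ring.
Qed.

Lemma Rn_bound_k : forall k (l : list (Rn m)), indep l -> Forall (Zk k) l -> (length l <= k)%nat.
Proof.
  induction k; intros l Hl HF.
  - destruct l as [|a l]; simpl; auto. exfalso.
    destruct Hl as [_ Ha]. apply Ha.
    replace a with (@vzero (Rn m)). apply span_zero.
    inversion HF; subst. apply functional_extensionality. intros [i Hi].
    cbn. symmetry; apply H1; lia.
  - destruct (split_lemma (Tk k) (Tk_lin k) nil I l Hl) as [ys [gs [Hy [Hg [Fy [Fg E]]]]]].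
    rewrite app_nil_r in Hg. apply R_indep in Hg. rewrite length_map in Hg.
    assert (length ys <= k)%nat.
    { apply IHk; auto. eapply Forall_impl; [|exact Fy]. intros y [H1 H2].
      simpl in H2. assert (Zy := Zk_span _ _ HF _ H1).
      intros i Hi Hki. destruct (Nat.eq_dec i k).
      - subst i. unfold Tk in H2. destruct (lt_dec k m); [|lia].
        rewrite <- H2. f_equal. f_equal. apply le_unique.
      - apply Zy; lia. }
    lia.
Qed.

Lemma Rn_bound (l : list (Rn m)) : indep l -> (length l <= m)%nat.
Proof.
  intros H; apply Rn_bound_k; auto.
  apply Forall_forall; intros v _ i Hi Hle; lia.
Qed.
End Rn.


Definition Dir {X : RVS} (C : X -> Prop) (p v : X) : Prop :=
  exists e, 0 < e /\ forall s, -e <= s <= e -> C (vadd p (vscal s v)).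

Definition GG {X : RVS} (C : X -> Prop) (p y : X) : Prop := C y /\ Dir C p (vsub y p).

Lemma div01 s e : 0 < e -> 0 <= s <= e -> 0 <= s / e <= 1.
Proof.
  intros He Hs. split.
  - unfold Rdiv; apply Rmult_le_pos; [lra|]. left; apply Rinv_0_lt_compat; auto.
  - apply (Rmult_le_reg_r e); auto. unfold Rdiv; rewrite Rmult_assoc, Rinv_l; lra.
Qed.

Lemma divlt1 a b : 0 < a < b -> a / b < 1.
Proof. intros H. apply (Rmult_lt_reg_r b); [lra|]. unfold Rdiv; rewrite Rmult_assoc, Rinv_l; lra. Qed.

Section Conv.
Context {X : RVS} (C : X -> Prop) (HC : convex_set C).

Lemma vscal_eq0 (c : R) (v : X) : c <> 0 -> vscal c v = vzero -> v = vzero.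
Proof.
  intros Hc E. replace v with (vscal (/c) (vscal c v)) by (vring_core; field; auto).
  rewrite E; vring.
Qed.

Lemma Dir_two p v e : C p -> 0 < e -> C (vadd p (vscal e v)) -> C (vadd p (vscal (-e) v)) -> Dir C p v.
Proof.
  intros Hp He H1 H2. exists e; split; auto. intros s Hs.
  destruct (Rle_dec 0 s).
  - replace (vadd p (vscal s v)) with (seg (vadd p (vscal e v)) p (s/e)).
    apply HC; auto. apply div01; lra.
    unfold seg; vring_core; field; lra.
  - replace (vadd p (vscal s v)) with (seg (vadd p (vscal (-e) v)) p (-s/e)).
    apply HC; auto. apply div01; lra.
    unfold seg; vring_core; field; lra.
Qed.

Lemma Dir_p p v : Dir C p v -> C p.
Proof. intros [e [He H]]. replace p with (vadd p (vscal 0 v)) by vring. apply H; lra. Qed.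

Lemma Dir0 p : C p -> Dir C p vzero.
Proof. intros Hp; exists 1; split; [lra|]. intros. replace (vadd p (vscal s vzero)) with p by vring. auto. Qed.

Lemma Dir_scal p c v : Dir C p v -> Dir C p (vscal c v).
Proof.
  intros Hd. assert (Hp := Dir_p _ _ Hd). destruct Hd as [e [He H]].
  destruct (Req_dec c 0) as [E|E].
  - subst. replace (vscal 0 v) with (@vzero X) by vring. apply Dir0; auto.
  - exists (e / Rabs c). split. apply Rdiv_lt_0_compat; auto. apply Rabs_pos_lt; auto.
    intros s Hs. replace (vadd p (vscal s (vscal c v))) with (vadd p (vscal (s * c) v)) by vring.
    apply H. assert (Hc := Rabs_pos_lt c E).
    assert (Rabs s <= e / Rabs c) by (apply Rabs_le; lra).
    assert (Rabs (s * c) <= e).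
    { rewrite Rabs_mult. apply (Rmult_le_compat_r (Rabs c)) in H0; [|lra].
      unfold Rdiv in H0; rewrite Rmult_assoc, Rinv_l in H0; lra. }
    split; [ assert (-(s*c) <= Rabs (s*c)) by (rewrite <- Rabs_Ropp; apply Rle_abs); lra
           | assert (s*c <= Rabs (s*c)) by apply Rle_abs; lra].
Qed.

Lemma Dir_add p u v : Dir C p u -> Dir C p v -> Dir C p (vadd u v).
Proof.
  intros [e1 [He1 H1]] [e2 [He2 H2]].
  exists (Rmin e1 e2 / 2). split. assert (0 < Rmin e1 e2) by (apply Rmin_glb_lt; auto). lra.
  intros s Hs. assert (Rmin e1 e2 <= e1) by apply Rmin_l. assert (Rmin e1 e2 <= e2) by apply Rmin_r.
  replace (vadd p (vscal s (vadd u v))) with (seg (vadd p (vscal (2*s) u)) (vadd p (vscal (2*s) v)) (1/2))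
    by (unfold seg; vring).
  apply HC. apply H1; lra. apply H2; lra. lra.
Qed.

Lemma Dir_sub p u v : Dir C p u -> Dir C p v -> Dir C p (vsub u v).
Proof. intros; apply Dir_add; auto; apply Dir_scal; auto. Qed.

Lemma Dir_transfer p z w : Dir C p (vsub z p) -> Dir C z w -> Dir C p w.
Proof.
  intros [e1 [He1 H1]] [d [Hd H2]].
  set (lam := e1 / (1 + e1)).
  assert (Hl : 0 < lam < 1). { unfold lam; split. apply Rdiv_lt_0_compat; lra. apply divlt1; lra. }
  exists (lam * d). split. nra.
  intros s Hs.
  assert (Hp' := H1 (- e1) ltac:(lra)).
  replace (vadd p (vscal s w)) with (seg (vadd z (vscal (s / lam) w)) (vadd p (vscal (- e1) (vsub z p))) lam).
  - apply HC; [|auto|lra]. apply H2. split.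
    + apply (Rmult_le_reg_l lam); [lra|]. unfold Rdiv. rewrite <- Rmult_assoc, (Rmult_comm lam s), Rmult_assoc, Rinv_r by lra. lra.
    + apply (Rmult_le_reg_l lam); [lra|]. unfold Rdiv. rewrite <- Rmult_assoc, (Rmult_comm lam s), Rmult_assoc, Rinv_r by lra. lra.
  - unfold seg, vsub, lam. vring_core; field; lra.
Qed.

Lemma GG_face p : C p -> face (GG C p) C.
Proof.
  intros Hp. split; [|split].
  - intros x y t [Cx Dx] [Cy Dy] Ht. split. apply HC; auto.
    replace (vsub (seg x y t) p) with (vadd (vscal t (vsub x p)) (vscal (1 - t) (vsub y p)))
      by (unfold seg, vsub; vring).
    apply Dir_add; apply Dir_scal; auto.
  - intros z [H _]; auto.
  - intros x y Hxy Hs [t0 [Ht0 [Cz Dz]]] t Ht. split. apply Hs; auto.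
    replace (vsub (seg x y t) p) with (vadd (vsub (seg x y t0) p) (vscal (t - t0) (vsub x y)))
      by (unfold seg, vsub; vring).
    apply Dir_add; auto. apply Dir_scal.
    apply (Dir_transfer _ (seg x y t0)); auto.
    exists (Rmin t0 (1 - t0) / 2). split. assert (0 < Rmin t0 (1 - t0)) by (apply Rmin_glb_lt; lra). lra.
    intros s Hs'. assert (Rmin t0 (1-t0) <= t0) by apply Rmin_l. assert (Rmin t0 (1-t0) <= 1 - t0) by apply Rmin_r.
    replace (vadd (seg x y t0) (vscal s (vsub x y))) with (seg x y (t0 + s)) by (unfold seg, vsub; vring).
    apply Hs. lra.
Qed.

Lemma GG_p p : C p -> GG C p p.
Proof. intros Hp; split; auto. replace (vsub p p) with (@vzero X) by (unfold vsub; vring). apply Dir0; auto. Qed.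

Lemma minface_GG p y : C p -> minface p C y -> GG C p y.
Proof. intros Hp H; apply H; [apply GG_face | apply GG_p]; auto. Qed.

End Conv.

Section Aff.
Context {X : RVS}.

Lemma aff_mono (A B : X -> Prop) x : (forall y, A y -> B y) -> aff A x -> aff B x.
Proof.
  intros H [pts [c [H1 [H2 [H3 H4]]]]]. exists pts, c; repeat split; auto.
  eapply Forall_impl; eauto.
Qed.

Lemma aff_in (A : X -> Prop) x : A x -> aff A x.
Proof. intros H. exists (x :: nil), (1 :: nil). simpl; repeat split; auto; first [ring | vring]. Qed.

Lemma lin_comb_shift (c : list R) (pts : list X) p : length c = length pts ->
  lin_comb c pts = vadd (lin_comb c (map (fun y => vsub y p) pts)) (vscal (fold_right Rplus 0 c) p).
Proof.
  revert pts; induction c; destruct pts; simpl; intros H; try discriminate.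
  - vring.
  - rewrite IHc by lia. unfold vsub; vring.
Qed.

Lemma aff_closed (P : X -> Prop) (A : X -> Prop) p x :
  P vzero -> (forall u v, P u -> P v -> P (vadd u v)) -> (forall c u, P u -> P (vscal c u)) ->
  (forall y, A y -> P (vsub y p)) -> aff A x -> P (vsub x p).
Proof.
  intros H0 HA HS HP [pts [c [H1 [H2 [H3 ->]]]]].
  rewrite (lin_comb_shift c pts p H1), H3.
  replace (vsub (vadd (lin_comb c (map (fun y : X => vsub y p) pts)) (vscal 1 p)) p)
    with (lin_comb c (map (fun y : X => vsub y p) pts)) by (unfold vsub; vring).
  clear H1 H3. revert c; induction H2; intros c; destruct c; simpl; auto.
Qed.

Lemma aff_dir_closed (P : X -> Prop) (A : X -> Prop) p v :
  P vzero -> (forall u v, P u -> P v -> P (vadd u v)) -> (forall c u, P u -> P (vscal c u)) ->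
  (forall y, A y -> P (vsub y p)) -> aff_dir A v -> P v.
Proof.
  intros H0 HA HS HP [x [y [Hx [Hy ->]]]].
  replace (vsub x y) with (vadd (vsub x p) (vscal (-1) (vsub y p))) by (unfold vsub; vring).
  apply HA; [|apply HS]; eapply aff_closed; eauto.
Qed.
End Aff.

Lemma aff_GG_Dir {X : RVS} (C : X -> Prop) (HC : convex_set C) p x :
  C p -> aff (minface p C) x -> Dir C p (vsub x p).
Proof.
  intros Hp H. eapply aff_closed with (A := minface p C); eauto.
  - apply Dir0; auto.
  - apply Dir_add; auto.
  - apply Dir_scal; auto.
  - intros y Hy. apply (minface_GG C HC p y Hp Hy).
Qed.

Lemma aff_dir_GG_Dir {X : RVS} (C : X -> Prop) (HC : convex_set C) (A : X -> Prop) p v :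
  C p -> (forall y, A y -> GG C p y) -> aff_dir A v -> Dir C p v.
Proof.
  intros Hp HA H. eapply aff_dir_closed with (A := A) (p := p); eauto.
  - apply Dir0; auto.
  - apply Dir_add; auto.
  - apply Dir_scal; auto.
  - intros y Hy. apply HA; auto.
Qed.

Lemma Dir_face_dir {X : RVS} (S F : X -> Prop) (HS : convex_set S) p v :
  face F S -> F p -> Dir S p v -> aff_dir F v.
Proof.
  intros [_ [_ HF]] Fp [e [He H]].
  destruct (classic (v = vzero)) as [E|E].
  - subst. exists p, p. repeat split; try apply aff_in; auto. unfold vsub; vring.
  - set (x := vadd p (vscal (e/2) v)). set (y := vadd p (vscal (-(e/2)) v)).
    assert (Hxy : x <> y).
    { intros Exy. apply E. apply (vscal_eq0 e); [lra|].
      replace (vscal e v) with (vsub x y) by (unfold x, y, vsub; vring). rewrite Exy; unfold vsub; vring. }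
    assert (Hseg : forall t, 0 < t < 1 -> seg x y t = vadd p (vscal (e/2 * (2*t-1)) v)).
    { intros t Ht; unfold seg, x, y; vring. }
    assert (HFall := HF x y Hxy).
    assert (Hin : forall t, 0 < t < 1 -> F (seg x y t)).
    { apply HFall.
      - intros t Ht. rewrite Hseg by auto. apply H. split; nra.
      - exists (1/2); split; [lra|]. rewrite Hseg by lra. replace (vadd p (vscal (e/2*(2*(1/2)-1)) v)) with p by vring. auto. }
    set (a := seg x y (3/4)).
    assert (Fa : F a) by (apply Hin; lra).
    exists (lin_comb ((1 - 4/e) :: (4/e) :: nil) (p :: a :: nil)), p.
    split; [|split].
    + exists (p :: a :: nil), ((1 - 4/e) :: (4/e) :: nil). simpl; repeat split; auto. ring.
    + apply aff_in; auto.
    + unfold a; rewrite Hseg by lra. simpl. unfold vsub. vring_core; field; lra.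
Qed.


Lemma ele_Fin a x : ele a (Fin x) -> exists y, a = Fin y /\ y <= x.
Proof. destruct a; simpl; intros H; [eexists; split; eauto | contradiction]. Qed.

Lemma posmin a b : 0 < a -> 0 < b -> exists t, 0 < t /\ t <= a /\ t <= b.
Proof. intros; exists (Rmin a b); split; [apply Rmin_glb_lt; auto| split; [apply Rmin_l|apply Rmin_r]]. Qed.

Lemma tfrac t e : 0 < e -> 0 < t -> t <= e / (1 + e) -> t < 1 /\ t / (1 - t) <= e.
Proof.
  intros He Ht H. apply (Rmult_le_compat_r (1+e)) in H; [|lra].
  unfold Rdiv in H; rewrite Rmult_assoc, Rinv_l in H by lra.
  split. nra. apply (Rmult_le_reg_r (1 - t)); [nra|]. unfold Rdiv; rewrite Rmult_assoc, Rinv_l by nra. nra.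
Qed.

Lemma lin_seg {V W : RVS} (T : V -> W) (HT : is_linear T) x y t :
  T (seg x y t) = seg (T x) (T y) t.
Proof. destruct HT as [H1 H2]; unfold seg; rewrite H1, !H2; auto. Qed.

Lemma lin_line {V W : RVS} (T : V -> W) (HT : is_linear T) x s y :
  T (vadd x (vscal s y)) = vadd (T x) (vscal s (T y)).
Proof. destruct HT as [H1 H2]; rewrite H1, !H2; auto. Qed.

Lemma lin_comb2 {V W : RVS} (T : V -> W) (HT : is_linear T) a x y :
  T (vadd (vscal a x) y) = vadd (vscal a (T x)) (T y).
Proof. destruct HT as [H1 H2]; rewrite H1, !H2; auto. Qed.

Lemma convex_lev {X : RVS} (g : X -> ereal) (Hg : convex_fun g) x a :
  g x = Fin a -> convex_set (lev g x).
Proof.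
  intros E u v t Hu Hv Ht. unfold lev in *. rewrite E in *.
  assert (H := Hg u v a a t Ht Hu Hv). destruct (ele_Fin _ _ H) as [y [Ey Hy]].
  rewrite Ey; simpl. nra.
Qed.

Section Main.
Context (V : RVS) (m : nat) (Rg : V -> ereal) (f : Rn m -> ereal) (Phi : V -> Rn m) (p : V).
Context (HR : convex_fun Rg) (Hf : convex_fun f) (HPhi : is_linear Phi)
        (Hmin : argmin_set Rg f Phi p).
Context (rp F0 : R) (Erp : Rg p = Fin rp) (EF0 : f (Phi p) = Fin F0).

Definition CC := lev Rg p.
Definition LL := Dir (lev f (Phi p)) (Phi p).
Definition DD := Dir CC p.
Definition SS := argmin_set Rg f Phi.

Lemma CC_conv : convex_set CC.
Proof. apply (convex_lev Rg HR p rp Erp). Qed.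
Lemma levf_conv : convex_set (lev f (Phi p)).
Proof. apply (convex_lev f Hf (Phi p) F0 EF0). Qed.
Lemma CC_p : CC p.
Proof. unfold CC, lev; rewrite Erp; simpl; lra. Qed.
Lemma levf_p : lev f (Phi p) (Phi p).
Proof. unfold lev; rewrite EF0; simpl; lra. Qed.

Lemma SS_char u : SS u <-> ele (eplus (Rg u) (f (Phi u))) (Fin (rp + F0)).
Proof.
  split.
  - intros H. specialize (H p). rewrite Erp, EF0 in H. exact H.
  - intros H v. assert (Hp := Hmin v). rewrite Erp, EF0 in Hp.
    destruct (Rg u), (f (Phi u)); simpl in H; try contradiction.
    destruct (Rg v), (f (Phi v)); simpl in *; auto. lra.
Qed.

Lemma eplus_le a b x y : ele a (Fin x) -> ele b (Fin y) -> ele (eplus a b) (Fin (x + y)).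
Proof. destruct a, b; simpl; intros; try contradiction; lra. Qed.

Lemma eplus_inv a b z : ele (eplus a b) (Fin z) -> exists x y, a = Fin x /\ b = Fin y /\ x + y <= z.
Proof. destruct a, b; simpl; intros; try contradiction. eauto. Qed.

Lemma SS_conv : convex_set SS.
Proof.
  intros u v t Hu Hv Ht. apply SS_char in Hu, Hv. apply SS_char.
  destruct (eplus_inv _ _ _ Hu) as [a1 [b1 [E1 [E2 H1]]]].
  destruct (eplus_inv _ _ _ Hv) as [a2 [b2 [E3 [E4 H2]]]].
  assert (HA := HR u v a1 a2 t Ht ltac:(rewrite E1; simpl; lra) ltac:(rewrite E3; simpl; lra)).
  assert (HB := Hf (Phi u) (Phi v) b1 b2 t Ht ltac:(rewrite E2; simpl; lra) ltac:(rewrite E4; simpl; lra)).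
  rewrite <- lin_seg in HB by auto.
  destruct (ele_Fin _ _ HA) as [x [Ex Hx]]. destruct (ele_Fin _ _ HB) as [y [Ey Hy]].
  rewrite Ex, Ey; simpl. nra.
Qed.

Lemma SS_p : SS p.
Proof. exact Hmin. Qed.

Lemma DL_DS y : DD y -> LL (Phi y) -> Dir SS p y.
Proof.
  intros [e1 [He1 H1]] [e2 [He2 H2]].
  destruct (posmin e1 e2 He1 He2) as [e [He [Ha Hb]]].
  exists e; split; auto. intros s Hs. apply SS_char.
  assert (A := H1 s ltac:(lra)). assert (B := H2 s ltac:(lra)).
  unfold CC, lev in A. unfold lev in B. rewrite Erp in A. rewrite EF0 in B.
  rewrite lin_line by auto. apply eplus_le; auto.
Qed.

Lemma D_const g : DD g -> exists e, 0 < e /\ forall s, -e <= s <= e -> Rg (vadd p (vscal s g)) = Fin rp.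
Proof.
  intros [e [He H]]. exists e; split; auto. intros s Hs.
  assert (A := H s Hs). assert (B := H (-s) ltac:(lra)).
  unfold CC, lev in A, B. rewrite Erp in A, B.
  destruct (ele_Fin _ _ A) as [a [Ea Ha]]. destruct (ele_Fin _ _ B) as [b [Eb Hb]].
  assert (Cv := HR _ _ a b (1/2) ltac:(lra) ltac:(rewrite Ea; simpl; lra) ltac:(rewrite Eb; simpl; lra)).
  replace (seg (vadd p (vscal s g)) (vadd p (vscal (- s) g)) (1 / 2)) with p in Cv by (unfold seg; vring).
  rewrite Erp in Cv. simpl in Cv. rewrite Ea. f_equal. lra.
Qed.

Lemma noR q rq g w : Rg q = Fin rq -> rq < rp -> DD g -> LL w ->
  vsub (Phi q) (Phi p) = vadd (Phi g) w -> False.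
Proof.
  intros Eq Hq [eg [Heg Hg]] [ew [Hew Hw]] E.
  assert (0 < eg / (1 + eg)) by (apply Rdiv_lt_0_compat; lra).
  destruct (posmin _ _ H Hew) as [t0 [Ht0 [Ht1 Ht2]]].
  destruct (posmin t0 (1/2) Ht0 ltac:(lra)) as [t [Ht [Ht3 Ht4]]].
  destruct (tfrac t eg Heg Ht ltac:(lra)) as [Ht5 Ht6].
  set (y := vadd p (vscal (- (t / (1 - t))) g)).
  assert (Hy : ele (Rg y) (Fin rp)).
  { assert (A := Hg (- (t / (1 - t)))). unfold CC, lev in A. rewrite Erp in A. apply A.
    assert (0 <= t / (1 - t)) by (apply Rlt_le, Rdiv_lt_0_compat; lra). lra. }
  assert (HA := HR q y rq rp t ltac:(lra) ltac:(rewrite Eq; simpl; lra) Hy).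
  assert (Efu : Phi (seg q y t) = vadd (Phi p) (vscal t w)).
  { rewrite lin_seg by auto. unfold y. rewrite lin_line by auto.
    replace (Phi q) with (vadd (vsub (Phi q) (Phi p)) (Phi p)) by (unfold vsub; vring).
    rewrite E. unfold seg. vring_core; field; lra. }
  assert (HB := Hw t ltac:(lra)). unfold lev in HB. rewrite EF0, <- Efu in HB.
  assert (Hm := Hmin (seg q y t)). rewrite Erp, EF0 in Hm.
  destruct (ele_Fin _ _ HA) as [a [Ea Ha]]. destruct (ele_Fin _ _ HB) as [b [Eb Hb]].
  rewrite Ea, Eb in Hm. simpl in Hm. nra.
Qed.

Lemma nof w1 y1 g w : f w1 = Fin y1 -> y1 < F0 -> DD g -> LL w ->
  vsub w1 (Phi p) = vadd (Phi g) w -> False.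
Proof.
  intros Eq Hq [eg [Heg Hg]] [ew [Hew Hw]] E.
  assert (0 < ew / (1 + ew)) by (apply Rdiv_lt_0_compat; lra).
  destruct (posmin _ _ H Heg) as [t0 [Ht0 [Ht1 Ht2]]].
  destruct (posmin t0 (1/2) Ht0 ltac:(lra)) as [t [Ht [Ht3 Ht4]]].
  destruct (tfrac t ew Hew Ht ltac:(lra)) as [Ht5 Ht6].
  set (y := vadd (Phi p) (vscal (- (t / (1 - t))) w)).
  assert (Hy : ele (f y) (Fin F0)).
  { assert (A := Hw (- (t / (1 - t)))). unfold lev in A. rewrite EF0 in A. apply A.
    assert (0 <= t / (1 - t)) by (apply Rlt_le, Rdiv_lt_0_compat; lra). lra. }
  assert (HB := Hf w1 y y1 F0 t ltac:(lra) ltac:(rewrite Eq; simpl; lra) Hy).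
  assert (Efu : seg w1 y t = Phi (vadd p (vscal t g))).
  { rewrite lin_line by auto. unfold y.
    replace w1 with (vadd (vsub w1 (Phi p)) (Phi p)) by (unfold vsub; vring).
    rewrite E. unfold seg. vring_core; field; lra. }
  assert (HA := Hg t ltac:(lra)). unfold CC, lev in HA. rewrite Erp in HA.
  rewrite Efu in HB.
  assert (Hm := Hmin (vadd p (vscal t g))). rewrite Erp, EF0 in Hm.
  destruct (ele_Fin _ _ HA) as [a [Ea Ha]]. destruct (ele_Fin _ _ HB) as [b [Eb Hb]].
  rewrite Ea, Eb in Hm. simpl in Hm. nra.
Qed.


Lemma epi_conv : convex_set (epi Rg).
Proof.
  intros z1 z2 t H1 H2 Ht. unfold epi in *.
  change (ele (Rg (seg (fst z1) (fst z2) t)) (Fin (t * snd z1 + (1-t) * snd z2))). apply HR; auto.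
Qed.

Lemma obl_R : oblique_face ((p, rp) : prodVS V R_RVS) (epi Rg) ->
  exists v c e, c <> 0 /\ 0 < e /\ forall s, -e <= s <= e -> ele (Rg (vadd p (vscal s v))) (Fin (rp + s * c)).
Proof.
  intros Hob. apply not_all_ex_not in Hob. destruct Hob as [w Hw].
  apply imply_to_and in Hw. destruct Hw as [Hw Hne].
  assert (Hz : epi Rg ((p, rp) : prodVS V R_RVS)) by (unfold epi; simpl; rewrite Erp; simpl; lra).
  destruct (aff_GG_Dir (epi Rg) epi_conv _ w Hz Hw) as [e [He H]].
  exists (vsub (fst w) p), (snd w + -1 * rp), e. split; [|split; [auto|]].
  - intro E; apply Hne; simpl. assert (K : forall x y : R, x + -1*y = 0 -> x = y) by (intros; lra). apply (K _ _ E).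
  - intros s Hs. specialize (H s Hs). unfold epi in H. exact H.
Qed.

Lemma hypo_conv M : convex_set (hypo_shift M f).
Proof.
  intros z1 z2 t H1 H2 Ht. unfold hypo_shift in *.
  destruct (f (fst z1)) as [y1|] eqn:E1; try contradiction.
  destruct (f (fst z2)) as [y2|] eqn:E2; try contradiction.
  assert (H := Hf (fst z1) (fst z2) y1 y2 t Ht ltac:(rewrite E1; simpl; lra) ltac:(rewrite E2; simpl; lra)).
  change (match f (seg (fst z1) (fst z2) t) with Fin y => t * snd z1 + (1-t) * snd z2 <= M - y | PInf => False end).
  destruct (ele_Fin _ _ H) as [y [Ey Hy]]. rewrite Ey. nra.
Qed.

Lemma obl_f : oblique_face ((Phi p, rp + F0 - F0) : prodVS (Rn m) R_RVS) (hypo_shift (rp + F0) f) ->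
  exists w c e, c <> 0 /\ 0 < e /\ forall s, -e <= s <= e -> ele (f (vadd (Phi p) (vscal s w))) (Fin (F0 - s * c)).
Proof.
  intros Hob. apply not_all_ex_not in Hob. destruct Hob as [w Hw].
  apply imply_to_and in Hw. destruct Hw as [Hw Hne].
  assert (Hz : hypo_shift (rp + F0) f ((Phi p, rp + F0 - F0) : prodVS (Rn m) R_RVS))
    by (unfold hypo_shift; simpl; rewrite EF0; lra).
  destruct (aff_GG_Dir _ (hypo_conv (rp + F0)) _ w Hz Hw) as [e [He H]].
  exists (vsub (fst w) (Phi p)), (snd w + -1 * (rp + F0 - F0)), e. split; [|split; [auto|]].
  - intro E; apply Hne; simpl. assert (K : forall x y : R, x + -1*y = 0 -> x = y) by (intros; lra). apply (K _ _ E).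
  - intros s Hs. specialize (H s Hs). unfold hypo_shift in H.
    change (match f (vadd (Phi p) (vscal s (vsub (fst w) (Phi p)))) with
            | Fin y => (rp + F0 - F0) + s * (snd w + -1 * (rp + F0 - F0)) <= rp + F0 - y | PInf => False end) in H.
    destruct (f (vadd (Phi p) (vscal s (vsub (fst w) (Phi p))))); try contradiction.
    simpl. assert (K: forall a x: R, (rp+F0-F0) + s*(a + -1*(rp+F0-F0)) <= rp+F0 - x -> x <= F0 - s*(a + -1*(rp+F0-F0))) by (intros; lra).
    apply K; exact H.
Qed.

Lemma DD_span l y : Forall DD l -> span l y -> DD y.
Proof.
  intros HF; apply (span_closed DD l); [ | | | exact HF].
  - exact (Dir0 CC p CC_p).
  - exact (Dir_add CC CC_conv p).
  - exact (Dir_scal CC p).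
Qed.

Lemma LL_span l y : Forall LL l -> span l y -> LL y.
Proof.
  intros HF; apply (span_closed LL l); [ | | | exact HF].
  - exact (Dir0 (lev f (Phi p)) (Phi p) levf_p).
  - exact (Dir_add (lev f (Phi p)) levf_conv (Phi p)).
  - exact (Dir_scal (lev f (Phi p)) (Phi p)).
Qed.

Lemma core (xs : list V) (b : list (Rn m)) :
  indep xs -> Forall DD xs -> indep b -> Forall LL b ->
  exists ys gs, (length ys + length gs = length xs)%nat /\ indep ys /\
    indep (map Phi gs ++ b) /\ Forall DD ys /\ Forall (Dir SS p) ys /\
    (forall w0, span (map Phi gs ++ b) w0 -> exists g w, DD g /\ LL w /\ w0 = vadd (Phi g) w).
Proof.
  intros Hx HxD Hb HbL.
  destruct (split_lemma Phi HPhi b Hb xs Hx) as [ys [gs [Hy [Hg [Fy [Fg E]]]]]].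
  exists ys, gs. repeat split; auto.
  - eapply Forall_impl; [|exact Fy]. intros y [H1 H2]. eapply DD_span; eauto.
  - eapply Forall_impl; [|exact Fy]. intros y [H1 H2]. apply DL_DS.
    eapply DD_span; eauto. eapply LL_span; eauto.
  - intros w0 Hw0. apply span_app in Hw0. destruct Hw0 as [v1 [v2 [H1 [H2 ->]]]].
    destruct (lin_span_inv Phi HPhi gs v1 H1) as [g [Hgs <-]].
    exists g, v2. repeat split; auto. eapply DD_span; [|exact Hgs].
    eapply Forall_impl; [|exact Fg]. intros; eapply DD_span; eauto.
    eapply LL_span; eauto.
Qed.


Lemma zlemma v c ev w' c' ew alpha g w :
  c <> 0 -> 0 < ev -> (forall s, -ev <= s <= ev -> ele (Rg (vadd p (vscal s v))) (Fin (rp + s * c))) ->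
  c' <> 0 -> 0 < ew -> (forall s, -ew <= s <= ew -> ele (f (vadd (Phi p) (vscal s w'))) (Fin (F0 - s * c'))) ->
  DD g -> LL w -> w' = vadd (vscal alpha (Phi v)) (vadd (Phi g) w) ->
  Dir SS p (vadd (vscal alpha v) g) /\ ~ DD (vadd (vscal alpha v) g).
Proof.
  intros Hc Hev Hv Hc' Hew Hw' Hg Hw Ew'.
  destruct (D_const g Hg) as [eg [Heg Hgc]].
  destruct Hw as [ewl [Hewl Hwl]].
  set (a := Rabs alpha).
  assert (Ha1 : alpha <= a) by apply RRle_abs.
  assert (Ha2 : - alpha <= a) by (unfold a; rewrite <- Rabs_Ropp; apply RRle_abs).
  set (K := ev / (2 * (a + 1))).
  assert (HK : K * (2 * (a + 1)) = ev) by (unfold K; field; lra).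
  assert (HK0 : 0 < K) by (unfold K; apply Rdiv_lt_0_compat; lra).
  destruct (posmin K (eg/2) HK0 ltac:(lra)) as [s1 [Hs1 [Hs1a Hs1b]]].
  destruct (posmin s1 (ew/2) Hs1 ltac:(lra)) as [s2 [Hs2 [Hs2a Hs2b]]].
  destruct (posmin s2 (ewl/2) Hs2 ltac:(lra)) as [s0 [Hs0 [Hs0a Hs0b]]].
  set (z := vadd (vscal alpha v) g).
  assert (Key : forall s, -s0 <= s <= s0 -> exists x y, Rg (vadd p (vscal s z)) = Fin x /\
            f (Phi (vadd p (vscal s z))) = Fin y /\ x <= rp + s * alpha * c /\ y <= F0 - s * c' /\ rp + F0 <= x + y).
  { intros s Hs.
    assert (E1 : vadd p (vscal s z) = seg (vadd p (vscal (2 * s * alpha) v)) (vadd p (vscal (2 * s) g)) (1/2))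
      by (unfold z, seg; vring).
    assert (B1 : -ev <= 2 * s * alpha <= ev).
    { assert (0 <= (K - s) * (a + alpha)) by (apply Rmult_le_pos; lra).
      assert (0 <= (K + s) * (a - alpha)) by (apply Rmult_le_pos; lra).
      assert (0 <= (K - s) * (a - alpha)) by (apply Rmult_le_pos; lra).
      assert (0 <= (K + s) * (a + alpha)) by (apply Rmult_le_pos; lra).
      assert (0 <= K * 2) by lra.
      split; nra. }
    assert (A1 := Hv _ B1).
    assert (A2 : Rg (vadd p (vscal (2 * s) g)) = Fin rp) by (apply Hgc; lra).
    assert (HA := HR _ _ _ rp (1/2) ltac:(lra) A1 ltac:(rewrite A2; simpl; lra)).
    rewrite <- E1 in HA.
    assert (E2 : Phi (vadd p (vscal s z)) = seg (vadd (Phi p) (vscal (2 * s) w')) (vadd (Phi p) (vscal (- (2 * s)) w)) (1/2)).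
    { rewrite lin_line by auto. unfold z. rewrite lin_comb2 by auto. rewrite Ew'. unfold seg; vring. }
    assert (A3 := Hw' (2 * s) ltac:(lra)).
    assert (A4 := Hwl (- (2 * s)) ltac:(lra)). unfold lev in A4. rewrite EF0 in A4.
    assert (HB := Hf _ _ _ _ (1/2) ltac:(lra) A3 A4). rewrite <- E2 in HB.
    destruct (ele_Fin _ _ HA) as [x [Ex Hx]]. destruct (ele_Fin _ _ HB) as [y [Ey Hy]].
    exists x, y. repeat split; auto; try lra.
    assert (Hm := Hmin (vadd p (vscal s z))). rewrite Erp, EF0, Ex, Ey in Hm. exact Hm. }
  assert (Eq : alpha * c = c').
  { destruct (Key s0 ltac:(lra)) as [x1 [y1 [_ [_ [H1 [H2 H3]]]]]].
    destruct (Key (- s0) ltac:(lra)) as [x2 [y2 [_ [_ [H4 [H5 H6]]]]]].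
    assert (0 <= s0 * (alpha * c - c')) by nra.
    assert (0 <= - s0 * (alpha * c - c')) by nra.
    assert (alpha * c - c' = 0) by nra. lra. }
  split.
  - exists s0; split; auto. intros s Hs. apply SS_char.
    destruct (Key s Hs) as [x [y [Ex [Ey [H1 [H2 H3]]]]]]. rewrite Ex, Ey. simpl. nra.
  - intros Hz. destruct (D_const z Hz) as [e3 [He3 Hz3]].
    destruct (posmin s0 e3 Hs0 He3) as [s [Hs [Hsa Hsb]]].
    destruct (Key s ltac:(lra)) as [x [y [Ex [Ey [H1 [H2 H3]]]]]].
    rewrite Hz3 in Ex by lra. injection Ex; intros <-.
    assert (s * c' = 0) by nra.
    apply Rmult_integral in H. destruct H; lra.
Qed.

Lemma bound_all (xs : list V) (b : list (Rn m)) (j : nat)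
  (Hx : indep xs) (HxD : Forall DD xs) (Hb : indep b) (HbL : Forall LL b)
  (Hj : forall l, indep l -> Forall (Dir SS p) l -> (length l <= j)%nat) :
  (length xs + length b <= m + j)%nat /\
  ((exists y ry, Rg y = Fin ry /\ ry < rp) \/ (exists y fy, f y = Fin fy /\ fy < F0) ->
     (length xs + length b + 1 <= m + j)%nat) /\
  (oblique_face ((p, rp) : prodVS V R_RVS) (epi Rg) ->
   oblique_face ((Phi p, rp + F0 - F0) : prodVS (Rn m) R_RVS) (hypo_shift (rp + F0) f) ->
   (length xs + length b + 2 <= m + j)%nat).
Proof.
  destruct (core xs b Hx HxD Hb HbL) as [ys [gs [Elen [Hys [Hgb [FyD [FyS Hspan]]]]]]].
  assert (Bj := Hj ys Hys FyS).
  assert (Bm := Rn_bound m _ Hgb). rewrite length_app, length_map in Bm.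
  assert (Hnot : forall w0, ~ span (map Phi gs ++ b) w0 -> (length gs + length b + 1 <= m)%nat).
  { intros w0 Hn. assert (Hi : indep (w0 :: map Phi gs ++ b)) by (split; auto).
    apply Rn_bound in Hi. cbn [length] in Hi. rewrite length_app, length_map in Hi. lia. }
  split; [lia|split].
  - intros [[y [ry [Ey Hy]]] | [y [fy [Ey Hy]]]].
    + assert (length gs + length b + 1 <= m)%nat; [|lia].
      apply (Hnot (vsub (Phi y) (Phi p))). intros Hs.
      destruct (Hspan _ Hs) as [g [w [Hg [Hw E]]]].
      exact (noR y ry g w Ey Hy Hg Hw E).
    + assert (length gs + length b + 1 <= m)%nat; [|lia].
      apply (Hnot (vsub y (Phi p))). intros Hs.
      destruct (Hspan _ Hs) as [g [w [Hg [Hw E]]]].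
      exact (nof y fy g w Ey Hy Hg Hw E).
  - intros HoR Hof.
    destruct (obl_R HoR) as [v [c [ev [Hc [Hev Hv]]]]].
    destruct (obl_f Hof) as [w' [c' [ew [Hc' [Hew Hw']]]]].
    assert (HPv : ~ span (map Phi gs ++ b) (Phi v)).
    { intros Hs. destruct (Hspan _ Hs) as [g [w [Hg [Hw E]]]].
      set (s := if Rlt_dec 0 c then - ev else ev).
      assert (Hsc : s * c < 0 /\ -ev <= s <= ev).
      { unfold s; destruct (Rlt_dec 0 c); [split; nra|].
        assert (c < 0) by (destruct (Rtotal_order c 0) as [?|[?|?]]; lra). split; nra. }
      assert (Hq := Hv s ltac:(lra)). destruct (ele_Fin _ _ Hq) as [rq [Eq Hrq]].
      apply (noR _ rq (vscal s g) (vscal s w) Eq ltac:(lra)).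
      - apply Dir_scal; auto.
      - apply Dir_scal; auto.
      - rewrite lin_line by auto. destruct HPhi as [_ H2]. rewrite H2, E. unfold vsub; vring. }
    destruct (classic (span (Phi v :: map Phi gs ++ b) w')) as [Hs|Hs].
    + destruct Hs as [alpha [h [Hh Eh]]].
      destruct (Hspan _ Hh) as [g [w [Hg [Hw E]]]].
      subst h.
      destruct (zlemma v c ev w' c' ew alpha g w Hc Hev Hv Hc' Hew Hw' Hg Hw Eh) as [HzS HzD].
      assert (Hz : indep (vadd (vscal alpha v) g :: ys)).
      { split; auto. intros Hs. apply HzD. eapply DD_span; eauto. }
      assert (B2 := Hj _ Hz ltac:(constructor; auto)). simpl in B2.
      assert (length gs + length b + 1 <= m)%nat by (apply (Hnot (Phi v)); auto).
      lia.
    + assert (Hi : indep (w' :: Phi v :: map Phi gs ++ b)) by (repeat split; auto).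
      apply Rn_bound in Hi. cbn [length] in Hi. rewrite length_app, length_map in Hi. lia.
Qed.

End Main.


Lemma nat_max (P : nat -> Prop) N : P O -> (forall n, P n -> (n <= N)%nat) ->
  exists n, P n /\ forall n', P n' -> (n' <= n)%nat.
Proof.
  revert P; induction N; intros P H0 HB.
  - exists O; split; [auto|]. intros n' Hn; specialize (HB _ Hn); lia.
  - destruct (classic (P (S N))) as [HS|HS].
    + exists (S N); split; [auto|]. intros n' Hn; apply HB; auto.
    + apply IHN; auto. intros n Hn. assert (HH := HB n Hn).
      destruct (Nat.eq_dec n (S N)); [subst; contradiction | lia].
Qed.

Lemma package {X : RVS} (C G : X -> Prop) p k : face G C -> G p ->
  (forall xs, lin_indep xs -> Forall (aff_dir G) xs -> (Z.of_nat (length xs) <= k)%Z) ->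
  in_face_dim_le C p k.
Proof.
  intros HF Gp HB.
  assert (Hk : (0 <= k)%Z).
  { assert (H := HB nil ltac:(apply lin_indep_indep; exact I) (Forall_nil _)). simpl in H; lia. }
  set (P := fun n => exists xs : list X, length xs = n /\ lin_indep xs /\ Forall (aff_dir G) xs).
  assert (P0 : P O) by (exists nil; repeat split; auto; apply lin_indep_indep; exact I).
  assert (PB : forall n, P n -> (n <= Z.to_nat k)%nat).
  { intros n Pn; unfold P in Pn; destruct Pn as [xs [Hl [Hi HF']]]. assert (H := HB xs Hi HF'). lia. }
  destruct (nat_max P (Z.to_nat k) P0 PB) as [n [Pn Hmax]].
  unfold P in Pn; destruct Pn as [xs [Hl [Hi HF']]].
  unfold in_face_dim_le. exists G; split; [auto|split; [auto|]]. exists n; split.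
  + split; [exists p; auto|]. split.
    * exists xs; auto.
    * intros l Hi' HF''. apply Hmax. unfold P. exists l; auto.
  + assert (H := HB xs Hi HF'). lia.
Qed.

Theorem theorem1 (V : RVS) (m : nat) (Rg : V -> ereal) (f : Rn m -> ereal)
  (Phi : V -> Rn m) (p : V) (l : nat) :
  convex_fun Rg -> convex_fun f ->
  is_linear Phi -> (forall w : Rn m, exists u : V, Phi u = w) ->
  argmin_set Rg f Phi p ->
  eplus (Rg p) (f (Phi p)) <> PInf ->
  linearly_closed (lev Rg p) -> contains_no_line (lev Rg p) ->
  affdim (minface (Phi p) (lev f (Phi p))) l ->
  forall (j : nat) (F : V -> Prop),
    face F (argmin_set Rg f Phi) -> F p -> affdim F j ->
    ((above_inf Rg p \/ above_inf f (Phi p)) ->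
       in_face_dim_le (lev Rg p) p (Z.of_nat m - Z.of_nat l + Z.of_nat j - 1)%Z) /\
    (~ (above_inf Rg p \/ above_inf f (Phi p)) ->
       in_face_dim_le (lev Rg p) p (Z.of_nat m - Z.of_nat l + Z.of_nat j)%Z) /\
    (double_oblique Rg f Phi p ->
       in_face_dim_le (lev Rg p) p (Z.of_nat m - Z.of_nat l + Z.of_nat j - 2)%Z).
Proof.
  intros HR Hf HPhi _ Hmin Hfin _ _ Hl j F HF Fp HFj.
  destruct (Rg p) as [rp|] eqn:Erp; [|simpl in Hfin; contradiction].
  destruct (f (Phi p)) as [F0|] eqn:EF0; [|simpl in Hfin; contradiction].
  destruct Hl as [_ [[b [Hbl [Hbi HbF]]] _]].
  assert (Hb : indep b) by (apply lin_indep_indep; auto).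
  assert (HbL : Forall (LL V m f Phi p) b).
  { eapply Forall_impl; [|exact HbF]. intros v Hv.
    eapply aff_dir_GG_Dir; [eapply levf_conv; eauto | eapply levf_p; eauto | | exact Hv].
    intros y Hy. eapply minface_GG; [eapply levf_conv; eauto | eapply levf_p; eauto | exact Hy]. }
  assert (Hj : forall l, indep l -> Forall (Dir (SS V m Rg f Phi) p) l -> (length l <= j)%nat).
  { intros l0 Hi HF0. destruct HFj as [_ [_ Hmax]]. apply Hmax.
    apply lin_indep_indep; auto.
    eapply Forall_impl; [|exact HF0]. intros v Hv.
    eapply Dir_face_dir; [eapply SS_conv; eauto | exact HF | exact Fp | exact Hv]. }
  assert (HCc : convex_set (CC V Rg p)) by (eapply CC_conv; eauto).
  assert (HCp : CC V Rg p p) by (eapply CC_p; eauto).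
  assert (Main : forall xs, lin_indep xs -> Forall (aff_dir (GG (CC V Rg p) p)) xs ->
    (length xs + length b <= m + j)%nat /\
    ((exists y ry, Rg y = Fin ry /\ ry < rp) \/ (exists y fy, f y = Fin fy /\ fy < F0) ->
       (length xs + length b + 1 <= m + j)%nat) /\
    (oblique_face ((p, rp) : prodVS V R_RVS) (epi Rg) ->
     oblique_face ((Phi p, rp + F0 - F0) : prodVS (Rn m) R_RVS) (hypo_shift (rp + F0) f) ->
     (length xs + length b + 2 <= m + j)%nat)).
  { intros xs Hx HxF. eapply bound_all; eauto.
    - apply lin_indep_indep; auto.
    - eapply Forall_impl; [|exact HxF]. intros v Hv.
      eapply aff_dir_GG_Dir; [exact HCc | exact HCp | | exact Hv]. intros y Hy; exact Hy. }
  assert (HG : face (GG (CC V Rg p) p) (lev Rg p)) by (apply GG_face; auto).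
  assert (HGp : GG (CC V Rg p) p p) by (apply GG_p; auto).
  split; [|split].
  - intros Hab. apply (package _ _ p _ HG HGp). intros xs Hx HxF.
    destruct (Main xs Hx HxF) as [_ [M2 _]].
    assert (length xs + length b + 1 <= m + j)%nat; [|lia].
    apply M2. destruct Hab as [[y Hy] | [y Hy]].
    + rewrite Erp in Hy. left. destruct (Rg y) as [ry|] eqn:E; simpl in Hy; [|contradiction]. eauto.
    + rewrite EF0 in Hy. right. destruct (f y) as [fy|] eqn:E; simpl in Hy; [|contradiction]. eauto.
  - intros _. apply (package _ _ p _ HG HGp). intros xs Hx HxF.
    destruct (Main xs Hx HxF) as [M1 _]. lia.
  - intros Hdo. unfold double_oblique in Hdo. rewrite Erp, EF0 in Hdo. cbv zeta in Hdo.
    cbn [real_of eplus] in Hdo. destruct Hdo as [Ho1 Ho2].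
    apply (package _ _ p _ HG HGp). intros xs Hx HxF.
    destruct (Main xs Hx HxF) as [_ [_ M3]].
    assert (length xs + length b + 2 <= m + j)%nat by (apply M3; auto). lia.
Qed.
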